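(* Let $j\in\mathbb Z$ and $\nu\in\mathbb C$ with $3\nu\in\mathbb Z$, $3\nu\equiv j\bmod 2$, and such that it is not the case that $\nu\in\mathbb Z$ and $\nu\equiv j\bmod 2$. Then the set $\{j'\in\mathbb Z:(j',\nu')\in W(j,\nu)\text{ for some }\nu'\}$ contains representatives of all three classes of $\mathbb Z/3\mathbb Z$.
   Context: $W$ is the group of linear maps of $\mathbb C^2$ generated by $S_1(j,\nu)=\bigl(\frac{3\nu-j}2,\frac{j+\nu}2\bigr)$ and $S_2(j,\nu)=\bigl(-\frac{3\nu+j}2,\frac{\nu-j}2\bigr)$ (isomorphic to the symmetric group $S_3$); $W(j,\nu)$ denotes the orbit of $(j,\nu)$. For $x\in\mathbb C$ and $j\in\mathbb Z$, ''$x\equiv j\bmod 2$'' means $x\in\mathbb Z$ and $x-j\in2\mathbb Z$. *)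

(* Defs.v *)
From HB Require Import structures.
From mathcomp Require Import all_boot all_order all_algebra.
From mathcomp Require Import complex.
From mathcomp Require Import reals.
Set Implicit Arguments. Unset Strict Implicit. Unset Printing Implicit Defensive.
Import Order.TTheory GRing.Theory Num.Theory.
Local Open Scope ring_scope.

Section W.
Variable R : realType.
Local Notation C := R[i].

Definition S1 (p : C * C) : C * C :=
  ((3 * p.2 - p.1) / 2, (p.1 + p.2) / 2).
Definition S2 (p : C * C) : C * C :=
  (- (3 * p.2 + p.1) / 2, (p.2 - p.1) / 2).

(* W = group generated by S1 and S2.  Both generators are involutions,
   so the generated group is the closure of id under left composition
   with S1 and S2. *)
Inductive inW : (C * C -> C * C) -> Prop :=
  | inW_id : inW id
  | inW_S1 w : inW w -> inW (S1 \o w)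
  | inW_S2 w : inW w -> inW (S2 \o w).

Definition in_W_orbit (p p' : C * C) : Prop := exists w, inW w /\ w p = p'.

Definition is_intC (x : C) : Prop := exists k : int, x = k%:~R.

Definition congr_mod2 (x : C) (j : int) : Prop :=
  exists k : int, x = k%:~R /\ (k = j %[mod 2])%Z.
End W.

(* Main.v *)
Require Import Defs.
From HB Require Import structures.
From mathcomp Require Import all_boot all_order all_algebra.
From mathcomp Require Import complex reals.
From mathcomp Require Import zify ring.
Import Order.TTheory GRing.Theory Num.Theory.
Local Open Scope ring_scope.

Lemma arith (j k a b r : int) : (2*a = k - j)%R -> (2*b = -(k+j))%R -> ~~ (3 %| k)%Z ->
  [\/ (j = r %[mod 3])%Z, (a = r %[mod 3])%Z | (b = r %[mod 3])%Z].
Proof.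
move=> ha hb hk.
have [h|h] := boolP ((j - r) %% 3 == 0)%Z.
  apply: Or31. lia.
have [h'|h'] := boolP ((a - r) %% 3 == 0)%Z.
  apply: Or32. lia.
apply: Or33. lia.
Qed.

Theorem lemma9p2 (R : realType) (j : int) (nu : R[i])
  (h3 : is_intC (3 * nu))
  (h3j : congr_mod2 (3 * nu) j)
  (hnot : ~ (is_intC nu /\ congr_mod2 nu j)) :
  forall r : int, exists j' : int, (j' = r %[mod 3])%Z /\
    exists nu' : R[i], in_W_orbit (j%:~R : R[i], nu) (j'%:~R : R[i], nu').
Proof.
move=> r.
case: h3j => k [hk hkj].
have h2 : (2 : R[i]) != 0 by rewrite pnatr_eq0.
have h3n : (3 : R[i]) != 0 by rewrite pnatr_eq0.
have hnu : nu = k%:~R / 3 by rewrite -hk; field.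
have k3 : ~~ (3 %| k)%Z.
  apply/negP => /dvdzP [t ht]; apply: hnot; split; exists t.
  - by rewrite hnu ht rmorphM /=; field.
  - split; first by rewrite hnu ht rmorphM /=; field.
    lia.
pose a := ((k - j) %/ 2)%Z.
pose b := (- (k + j) %/ 2)%Z.
have ha : 2 * a = k - j by rewrite /a; lia.
have hb : 2 * b = - (k + j) by rewrite /b; lia.
have ha' : (a%:~R : R[i]) = (k%:~R - j%:~R) / 2.
  have -> : k = 2 * a + j by lia.
  by rewrite rmorphD rmorphM /=; field.
have hb' : (b%:~R : R[i]) = - (k%:~R + j%:~R) / 2.
  have -> : k = - 2 * b - j by lia.
  by rewrite rmorphB rmorphM rmorphN /=; field.
case: (@arith j k a b r ha hb k3) => H.
- exists j; split => //; exists nu, id; split => //; exact: inW_id.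
- exists a; split => //; exists ((j%:~R + nu) / 2), (@S1 R \o id); split.
    exact/inW_S1/inW_id.
  by rewrite /S1 /= ha' hk.
- exists b; split => //; exists ((nu - j%:~R) / 2), (@S2 R \o id); split.
    exact/inW_S2/inW_id.
  by rewrite /S2 /= hb' hk.
Qed.
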